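(* Let $X$ be a finite set of proposals with $|X|\geq 3$. No profile-index-based DSF $\Delta_\delta$ induced by a neutral profile index function $\delta$ satisfies Position Unanimity.
   Context: $X!$ is the set of strict linear orders on $X$; a profile is a function $R:N\to X!$ with $N\subset\mathbb{N}$ finite and nonempty. A profile is unanimous if all agents report the same ranking. A profile index function is a function $\delta$ from the set of all profiles to $\mathbb{R}$; it is neutral if $\delta(R)=\delta(\sigma(R))$ for every permutation $\sigma:X\to X$ (applied to rename proposals in every ranking). $R^{\hat{x}}$ denotes the profile obtained from $R$ by moving $x$ to the top of every agent's ranking (other proposals keep their relative order), and $\Delta_\delta(R)=\arg\min_{x\in X}\delta(R^{\hat{x}})$. A proposal $x$ occurs in the same position throughout $R$ if the number of proposals ranked above $x$ is the same in every agent's ranking. Position Unanimity: $x\notin\Delta(R)$ for every non-unanimous profile $R$ and every proposal $x$ occurring in the same position throughout $R$. *)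

(* Defs.v *)
From HB Require Import structures.
From mathcomp Require Import all_boot all_order all_algebra.
From mathcomp Require Import fingroup perm.
From mathcomp Require Import finmap.
From mathcomp Require Import reals.

Set Implicit Arguments.
Unset Strict Implicit.
Unset Printing Implicit Defensive.

Import Order.TTheory GRing.Theory Num.Theory.
Local Open Scope fset_scope.

Section Defs.
Variable X : finType.

(* r x y : x is ranked strictly above y. *)
Definition strict_linear (r : rel X) : bool :=
  [&& [forall x, ~~ r x x],
      [forall x, forall y, forall z, r x y ==> r y z ==> r x z] &
      [forall x, forall y, (x != y) ==> (r x y || r y x)]].

Definition ranking := {r : rel X | strict_linear r}.

Definition rk (o : ranking) : rel X := sval o.

Record profile := Profile {
  agents : {fset nat};
  agents_nonempty : agents != fset0;
  prefs : {ffun agents -> ranking}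
}.

Definition unanimous (P : profile) : Prop :=
  forall i j : agents P, prefs P i = prefs P j.

(* renaming proposals by a permutation s: s a takes the place of a *)
Definition rename_rel (s : {perm X}) (r : rel X) : rel X :=
  fun a b => r ((s^-1)%g a) ((s^-1)%g b).

Lemma rename_rel_lin (s : {perm X}) (o : ranking) :
  strict_linear (rename_rel s (rk o)).
Proof.
case: o => r /= /and3P [/forallP Hi /forallP Ht /forallP Hc].
apply/and3P; split.
- by apply/forallP => x; rewrite /rename_rel Hi.
- apply/forallP => x; apply/forallP => y; apply/forallP => z.
  exact: (forallP (forallP (Ht _) _) _).
- apply/forallP => x; apply/forallP => y; apply/implyP => nxy.
  apply: (implyP (forallP (Hc _) _)).
  by apply: contra nxy => /eqP /(congr1 s); rewrite !permKV => ->.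
Qed.

Definition rename_ranking (s : {perm X}) (o : ranking) : ranking :=
  exist _ (rename_rel s (rk o)) (rename_rel_lin s o).

Definition rename_profile (s : {perm X}) (P : profile) : profile :=
  Profile (agents_nonempty P) [ffun i => rename_ranking s (prefs P i)].

Definition top_rel (x : X) (r : rel X) : rel X :=
  fun a b => (b != x) && ((a == x) || r a b).

Lemma top_rel_lin (x : X) (o : ranking) : strict_linear (top_rel x (rk o)).
Proof.
case: o => r /= /and3P [/forallP Hi /forallP Ht /forallP Hc].
apply/and3P; split.
- apply/forallP => a; rewrite /top_rel.
  by case: (a =P x) => //= _; rewrite Hi.
- apply/forallP => a; apply/forallP => b; apply/forallP => c.
  rewrite /top_rel; apply/implyP => /andP [nbx /orP [/eqP ->|rab]];
    apply/implyP => /andP [ncx].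
    by rewrite ncx eqxx.
  rewrite (negbTE nbx) /= => rbc; rewrite ncx /=.
  by rewrite (implyP (implyP (forallP (forallP (Ht a) b) c) rab) rbc) orbT.
- apply/forallP => a; apply/forallP => b; apply/implyP => nab.
  rewrite /top_rel.
  have [ax|nax] := eqVneq a x.
    by subst a; rewrite /= andbT orbF eq_sym.
  have [bx|nbx] := eqVneq b x.
    by subst b.
  rewrite /=.
  exact: (implyP (forallP (Hc a) b) nab).
Qed.

Definition top_ranking (x : X) (o : ranking) : ranking :=
  exist _ (top_rel x (rk o)) (top_rel_lin x o).

Definition top_profile (x : X) (P : profile) : profile :=
  Profile (agents_nonempty P) [ffun i => top_ranking x (prefs P i)].

Definition position (o : ranking) (x : X) : nat := #|[pred y | rk o y x]|.

Definition same_position (P : profile) (x : X) : Prop :=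
  forall i j : agents P, position (prefs P i) x = position (prefs P j) x.

Section Index.
Variable R : realType.

Definition neutral (delta : profile -> R) : Prop :=
  forall (s : {perm X}) (P : profile), delta P = delta (rename_profile s P).

Definition in_Delta (delta : profile -> R) (P : profile) (x : X) : Prop :=
  forall y : X, (delta (top_profile x P) <= delta (top_profile y P))%R.

Definition position_unanimity (delta : profile -> R) : Prop :=
  forall (P : profile) (x : X),
    ~ unanimous P -> same_position P x -> ~ in_Delta delta P x.

End Index.
End Defs.

(* Main.v *)
Require Import Defs.
From mathcomp Require Import all_boot all_order all_algebra.
From mathcomp Require Import fingroup perm.
From mathcomp Require Import finmap.
From mathcomp Require Import reals.
From mathcomp Require Import zify.
From Stdlib Require Import FunctionalExtensionality.

Set Implicit Arguments.
Unset Strict Implicit.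
Unset Printing Implicit Defensive.

Lemma key_surj (X : finType) (k : X -> nat) : injective k ->
  (forall a, k a < #|X|) -> forall v, v < #|X| -> exists a, k a = v.
Proof.
move=> Hk Hb v Hv.
have U : uniq (map k (enum X)) by rewrite map_inj_uniq // enum_uniq.
have S : {subset map k (enum X) <= iota 0 #|X|}.
  by move=> u /mapP [a _ ->]; rewrite mem_iota /= add0n.
have L : size (iota 0 #|X|) <= size (map k (enum X)) by rewrite size_iota size_map -cardE.
have [_ E] := uniq_min_size U S L.
have : v \in map k (enum X) by rewrite E mem_iota.
by case/mapP => a _ ->; exists a.
Qed.

Lemma card_lt_key (X : finType) (k : X -> nat) : injective k ->
  (forall a, k a < #|X|) -> forall x, #|[pred y | k y < k x]| = k x.
Proof.
move=> Hk Hb x; rewrite cardE.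
have U : uniq (map k (enum [pred y | k y < k x])) by rewrite map_inj_uniq // enum_uniq.
have E : map k (enum [pred y | k y < k x]) =i iota 0 (k x).
  move=> u; rewrite mem_iota add0n /=; apply/mapP/idP => [[a]|Hu].
    by rewrite mem_enum inE => Ha ->.
  have [a Ha] := key_surj Hk Hb (ltn_trans Hu (Hb x)).
  by exists a => //; rewrite mem_enum inE Ha.
have := uniq_perm U (iota_uniq 0 (k x)) E => /perm_size.
by rewrite size_map size_iota.
Qed.

Lemma ranking_ext (X : finType) (o1 o2 : ranking X) :
  (forall a b, rk o1 a b = rk o2 a b) -> o1 = o2.
Proof.
case: o1 o2 => [r1 H1] [r2 H2] /= E.
have Er : r1 = r2.
  by apply: functional_extensionality => a; apply: functional_extensionality => b; apply: E.
subst r2; congr exist; apply: bool_irrelevance.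
Qed.

Definition keyrel (X : finType) (k : X -> nat) : rel X := fun a b => k a < k b.

Lemma keyrel_lin (X : finType) (k : X -> nat) : injective k -> strict_linear (keyrel k).
Proof.
move=> Hk; apply/and3P; split.
- by apply/forallP => x; rewrite /keyrel ltnn.
- apply/forallP => x; apply/forallP => y; apply/forallP => z.
  by apply/implyP => H1; apply/implyP => H2; rewrite /keyrel; apply: ltn_trans H1 H2.
- apply/forallP => x; apply/forallP => y; apply/implyP => nxy.
  rewrite /keyrel; case: (ltngtP (k x) (k y)) => // /Hk E.
  by rewrite E eqxx in nxy.
Qed.

Definition keyrank (X : finType) (k : X -> nat) (Hk : injective k) : ranking X :=
  exist _ (keyrel k) (keyrel_lin Hk).

Lemma position_key (X : finType) (k : X -> nat) (Hk : injective k) :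
  (forall a, k a < #|X|) -> forall x, position (keyrank Hk) x = k x.
Proof. by move=> Hb x; rewrite /position /=; apply: card_lt_key. Qed.

Lemma rename_eq (X : finType) (R : realType) (delta : profile X -> R) :
  neutral delta -> forall (P : profile X) (y z : X) (cy cz : X -> nat)
  (D : agents P -> nat -> nat),
  injective cz -> (forall a, cz a < #|X|) -> injective cy -> (forall a, cy a < #|X|) ->
  (forall i a b, top_rel y (rk (prefs P i)) a b = (D i (cy a) < D i (cy b))) ->
  (forall i a b, top_rel z (rk (prefs P i)) a b = (D i (cz a) < D i (cz b))) ->
  delta (top_profile y P) = delta (top_profile z P).
Proof.
move=> Hn P y z cy cz D Hz Hzb Hy Hyb Ey Ez.
pose t a := odflt a [pick b | cy b == cz a].
have Ht : forall a, cy (t a) = cz a.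
  move=> a; rewrite /t; case: pickP => [b /eqP //|H].
  have [b Hb] := key_surj Hy Hyb (Hzb a).
  by have := H b; rewrite Hb eqxx.
have ti : injective t by move=> a1 a2 E; apply: Hz; rewrite -!Ht E.
rewrite (Hn ((perm ti)^-1)%g (top_profile y P)).
rewrite /rename_profile /top_profile /=.
congr (delta _).
match goal with |- @Profile _ _ _ ?f = @Profile _ _ _ ?g => suff -> : f = g by [] end.
apply/ffunP => i; rewrite !ffunE; apply: ranking_ext => a b /=.
rewrite /rename_rel invgK !permE /= Ey !Ht -Ez.
by [].
Qed.

Ltac crunch := repeat match goal with
  | |- context [if ?x < ?y then _ else _] => case: (ltnP x y) => ?
  | |- context [if ?x <= ?y then _ else _] => case: (leqP x y) => ?
  | H : context [if ?x < ?y then _ else _] |- _ => move: H; case: (ltnP x y) => ? ?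
  | H : context [if ?x <= ?y then _ else _] |- _ => move: H; case: (leqP x y) => ? ?
  end.

Definition idx (X : finType) (a : X) : nat := enum_rank a.
Lemma idx_inj (X : finType) : injective (@idx X).
Proof. by move=> a b /val_inj /enum_rank_inj. Qed.
Lemma idx_lt (X : finType) (a : X) : idx a < #|X|.
Proof. exact: ltn_ord. Qed.
Lemma idx_neq (X : finType) (a b : X) : a != b -> idx a <> idx b.
Proof. by move=> nab /idx_inj E; rewrite E eqxx in nab. Qed.

Definition key2 (X : finType) (j : nat) (a : X) : nat :=
  if idx a < j then idx a else #|X| + j - (idx a).+1.
Lemma key2_inj (X : finType) j : injective (@key2 X j).
Proof.
move=> a b; rewrite /key2 => E; apply: idx_inj.
have := idx_lt a; have := idx_lt b; move: E; crunch; lia.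
Qed.
Lemma key2_lt (X : finType) j (a : X) : key2 j a < #|X|.
Proof. rewrite /key2; have := idx_lt a; crunch; lia. Qed.

Definition cpos (X : finType) (y a : X) : nat :=
  if a == y then 0 else if idx a < idx y then (idx a).+1 else idx a.
Lemma cpos_inj (X : finType) (y : X) : injective (cpos y).
Proof.
move=> a b; rewrite /cpos.
case: (eqVneq a y) => [->|ay]; case: (eqVneq b y) => [->|bY] //.
- have := idx_neq bY; crunch; lia.
- have := idx_neq ay; crunch; lia.
- have := idx_neq ay; have := idx_neq bY => H1 H2 E; apply: idx_inj; move: E; crunch; lia.
Qed.
Lemma cpos_lt (X : finType) (y a : X) : cpos y a < #|X|.
Proof.
rewrite /cpos; have := idx_lt a; have := idx_lt y.
case: (eqVneq a y) => _; crunch; lia.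
Qed.

Definition D2 (n j l : nat) : nat := if l <= j then l else n + j - l.

Lemma top1 (X : finType) (y a b : X) :
  top_rel y (keyrel (@idx X)) a b = (cpos y a < cpos y b).
Proof.
rewrite /top_rel /keyrel /cpos.
case: (eqVneq a y) => [->|ay]; case: (eqVneq b y) => [->|bY];
  rewrite ?eqxx ?(negbTE ay) ?(negbTE bY) /=;
  try have := idx_neq ay; try have := idx_neq bY; intros; crunch;
  try apply/idP/idP; lia.
Qed.

Lemma top2 (X : finType) j (y a b : X) : j <= idx y ->
  top_rel y (keyrel (key2 j)) a b = (D2 #|X| j (cpos y a) < D2 #|X| j (cpos y b)).
Proof.
move=> jy; rewrite /top_rel /keyrel /cpos /D2 /key2.
have := idx_lt a; have := idx_lt b; have := idx_lt y.
case: (eqVneq a y) => [->|ay]; case: (eqVneq b y) => [->|bY];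
  rewrite ?eqxx ?(negbTE ay) ?(negbTE bY) /=;
  try have := idx_neq ay; try have := idx_neq bY; intros; crunch;
  try apply/idP/idP; lia.
Qed.


Definition Ag : {fset nat} := [fset 0%N; 1%N]%fset.
Lemma Ag0 : 0%N \in Ag. Proof. by rewrite !inE. Qed.
Lemma Ag1 : 1%N \in Ag. Proof. by rewrite !inE. Qed.
Lemma Ag_ne : Ag != fset0%fset. Proof. by apply/fset0Pn; exists 0%N; exact: Ag0. Qed.

Definition o1 (X : finType) : ranking X := keyrank (@idx_inj X).
Definition o2 (X : finType) j : ranking X := keyrank (@key2_inj X j).

Definition Pj (X : finType) (j : nat) : profile X :=
  Profile Ag_ne [ffun i : Ag => if val i == 0%N then o1 X else o2 X j].

Lemma rest_eq (X : finType) (R : realType) (delta : profile X -> R) j (y z : X) :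
  neutral delta -> j <= idx y -> j <= idx z ->
  delta (top_profile y (Pj X j)) = delta (top_profile z (Pj X j)).
Proof.
move=> Hn jy jz.
apply: (@rename_eq X R delta Hn (Pj X j) y z (cpos y) (cpos z)
  (fun i : Ag => if val i == 0%N then id else D2 #|X| j)
  (@cpos_inj X z) (@cpos_lt X z) (@cpos_inj X y) (@cpos_lt X y)).
- move=> i a b /=; rewrite ffunE; case: (val i == 0%N).
  + exact: top1.
  + exact: top2.
- move=> i a b /=; rewrite ffunE; case: (val i == 0%N).
  + exact: top1.
  + exact: top2.
Qed.

Lemma samepos (X : finType) j (x : X) : key2 j x = idx x -> same_position (Pj X j) x.
Proof.
move=> E i k /=; rewrite !ffunE.
have P1 : position (o1 X) x = idx x := position_key (@idx_inj X) (@idx_lt X) x.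
have P2 : position (o2 X j) x = idx x by rewrite -E; exact: position_key (@key2_inj X j) (@key2_lt X j) x.
by case: (val i == 0%N); case: (val k == 0%N); rewrite ?P1 ?P2.
Qed.

Lemma nonunan (X : finType) j : j <= 1 -> j + 2 < #|X| -> ~ unanimous (Pj X j).
Proof.
move=> j1 jn U.
have ja : j < #|X| by lia.
have jb : j.+1 < #|X| by lia.
have [a Ha] := key_surj (@idx_inj X) (@idx_lt X) ja.
have [b Hb] := key_surj (@idx_inj X) (@idx_lt X) jb.
have := U [` Ag0]%fset [` Ag1]%fset; rewrite !ffunE /= => E.
have : rk (o1 X) a b = rk (o2 X j) a b by rewrite E.
rewrite /= /keyrel /key2 Ha Hb; crunch; lia.
Qed.

Theorem theorem2 (X : finType) (R : realType) :
  3 <= #|X| ->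
  forall delta : profile X -> R,
    neutral delta -> ~ position_unanimity delta.
Proof.
move=> H3 delta Hn PU.
have [j [h [j1 Eh]]] : exists j h, j <= 1 /\ #|X| = j + 2 * h + 1.
  case: (boolP (odd #|X|)) => Ho.
    exists 0, (#|X| ./2); split => //.
    by move: (odd_double_half #|X|); rewrite Ho -muln2 /= => E; lia.
  exists 1, (#|X| ./2).-1; split => //.
  move: (odd_double_half #|X|); rewrite (negbTE Ho) -muln2 /= add0n.
  move: H3; case: (#|X| ./2) => [|m] /=; lia.
have Lm : j + h < #|X| by lia.
have L0 : 0 < #|X| by lia.
have [am Hm] := key_surj (@idx_inj X) (@idx_lt X) Lm.
have [a0 H0] := key_surj (@idx_inj X) (@idx_lt X) L0.
have NU : ~ unanimous (Pj X j) by apply: nonunan => //; lia.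
case: (boolP ((j == 1) && (delta (top_profile a0 (Pj X j)) <= delta (top_profile am (Pj X j)))%R)).
- case/andP => /eqP j1' Hle.
  apply: (PU (Pj X j) a0 NU).
    by apply: samepos; rewrite /key2 H0 j1'.
  move=> y; case: (ltnP (idx y) j) => Hy.
    have -> : y = a0 by apply: idx_inj; lia.
    exact: Order.POrderTheory.lexx.
  rewrite (rest_eq Hn (y := y) (z := am)) //; last by lia.
- move=> Hc; apply: (PU (Pj X j) am NU).
    by apply: samepos; rewrite /key2 Hm; crunch; lia.
  move=> y; case: (ltnP (idx y) j) => Hy.
    have Ey : y = a0 by apply: idx_inj; lia.
    subst y.
    have j1' : j = 1 by lia.
    move: Hc; rewrite j1' eqxx /= -Order.TotalTheory.ltNge => Hlt.
    exact: Order.POrderTheory.ltW.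
  rewrite (rest_eq Hn (y := y) (z := am)) //; last by lia.
Qed.
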